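(* Let $P_0,\dots,P_n$ be a transformation sequence constructed by using the transformation rules R1–R9 (defined in the context), and let $p$ be a non-basic predicate in $P_n$. Assume that: 1. if the folding rule is applied for the derivation of a clause $C$ in program $P_{k+1}$ from clauses $C_1,\dots,C_m$ in program $P_k$ using clauses $D_1,\dots,D_m$ in $\mathit{Defs}_k$, with $0\le k<n$, then for every $i\in\{1,\dots,m\}$ there exists $j\in\{1,\dots,n-1\}$ such that $D_i$ occurs in $P_j$ and $P_{j+1}$ is derived from $P_j$ by unfolding $D_i$; 2. during the transformation sequence $P_0,\dots,P_n$ the definition elimination rule either is never applied or it is applied w.r.t. predicate $p$ once only, in the last step, i.e. when deriving $P_n$ from $P_{n-1}$. Then, for every ground atom $A$ with predicate $p$, $M(P_0\cup\mathit{Defs}_n)\models A$ iff $M(P_n)\models A$.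
   Context: Syntax. There are infinite, pairwise disjoint sets of variables, function symbols (each with an arity) and predicate symbols (each with an arity). The predicate symbols $\mathit{true}$ (arity 0), $=$ and $\neq$ (arity 2) are basic; all other predicate symbols are non-basic. Terms are built from variables and function symbols. A basic atom is $\mathit{true}$, $t_1=t_2$ (an equation) or $t_1\neq t_2$ (a disequation); a non-basic atom is $p(t_1,\dots,t_m)$ with $p$ non-basic. A goal is a conjunction $G_1,G_2$ of atoms, where '','' is associative with neutral element $\mathit{true}$. A clause $C$ is $A\leftarrow G$ with $A$ a non-basic atom (its head $hd(C)$) and $G$ a goal (its body $bd(C)$); it is a clause for $p$ if its head has predicate $p$. A program is a set of clauses. In a program $P$, $p$ depends on $q$ iff $(p,q)$ is in the transitive closure of the relation ''some clause for $p$ in $P$ has $q$ in its body''; $p$ depends on a clause $C$ iff either $C$ is a clause for $p$ or $C$ is a clause for some $q$ on which $p$ depends. A renamed apart clause is a variant of a clause whose variables are fresh. All mgu's are relevant and idempotent. Declarative semantics. An $\mathcal H$-interpretation is a set $I$ of ground non-basic atoms. $I\models \mathit{true}$; $I\models t=t$ for every ground term $t$; $I\models t_1\neq t_2$ for distinct ground terms $t_1,t_2$; $I\models A$ iff $A\in I$ for ground non-basic $A$; $I\models G_1,G_2$ iff $I\models G_1$ and $I\models G_2$; $I\models C$ for a ground clause iff $I\models hd(C)$ or $I\not\models bd(C)$; $I\models P$ iff $I\models C$ for every ground instance $C$ of a clause of $P$. $M(P)$ denotes the least (w.r.t. inclusion) $\mathcal H$-interpretation $I$ with $I\models P$. Transformation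 rules. A transformation sequence is a sequence of programs $P_0,\dots,P_n$ where for each $k<n$, $P_{k+1}$ is derived from $P_k$ by one of the rules below. $\mathit{Defs}_k$ is the set of clauses (definition clauses) introduced by R1 during the construction of $P_0,\dots,P_k$ ($\mathit{Defs}_0=\emptyset$). R1 (Definition introduction): $P_{k+1}=P_k\cup\{D_1,\dots,D_m\}$, $m\ge1$, where $D_j$ is $\mathit{newp}(X_1,\dots,X_h)\leftarrow \mathit{Body}_j$, $\mathit{newp}$ is a non-basic predicate not occurring in $P_0,\dots,P_k$, $X_1,\dots,X_h$ are distinct variables each occurring in some $\mathit{Body}_j$, every non-basic predicate in each $\mathit{Body}_j$ occurs in $P_0$, and each $\mathit{Body}_j$ contains at least one non-basic atom. R2 (Definition elimination w.r.t. $p$): $P_{k+1}=\{C\in P_k\mid p \text{ depends on } C\}$. R3 (Unfolding): let $C$ be a renamed apart clause $H\leftarrow G_1,A,G_2$ of $P_k$ with $A$ non-basic, and let $C_1,\dots,C_m$ ($m\ge0$) be the clauses of $P_k$ whose heads unify with $A$, via mgu's $\vartheta_1,\dots,\vartheta_m$; then $P_{k+1}=(P_k-\{C\})\cup\{D_1,\dots,D_m\}$ with $D_i=(H\leftarrow G_1,bd(C_i),G_2)\vartheta_i$. R4 (Folding): let $C_i: H\leftarrow G_1,\mathit{Body}_i\vartheta,G_2$ ($i=1,\dots,m$) be renamed clauses of $P_k$ and $D_i:\mathit{newp}(X_1,\dots,X_h)\leftarrow \mathit{Body}_i$ ($i=1,\dots,m$) be all clauses of $\mathit{Defs}_k$ with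 head predicate $\mathit{newp}$, such that for every $i$ and every variable $X$ of $\mathit{Body}_i$ not in $\{X_1,\dots,X_h\}$: $X\vartheta$ is a variable not occurring in $(H,G_1,G_2)$, and $X\vartheta$ does not occur in $Y\vartheta$ for any variable $Y\neq X$ of $\mathit{Body}_i$. Then $P_{k+1}=(P_k-\{C_1,\dots,C_m\})\cup\{E\}$ with $E: H\leftarrow G_1,\mathit{newp}(X_1,\dots,X_h)\vartheta,G_2$. R5 (Subsumption): a clause $H\leftarrow G_1$ subsumes $(H\leftarrow G_1,G_2)\vartheta$ for any substitution $\vartheta$; $P_{k+1}$ is $P_k$ minus a clause subsumed by another clause of $P_k$. R6 (Head generalization): for a clause $C: H\{X/t\}\leftarrow \mathit{Body}$ in $P_k$ where $X$ occurs in $H$ and $X$ does not occur in $C$, replace $C$ by $H\leftarrow X=t,\mathit{Body}$. R7 (Case split): for a clause $C: H\leftarrow \mathit{Body}$ in $P_k$ and a binding $X/t$ with $X$ not occurring in $t$, replace $C$ by the two clauses $(H\leftarrow\mathit{Body})\{X/t\}$ and $H\leftarrow X\neq t,\mathit{Body}$. R8 (Equation elimination): for $C_1: H\leftarrow G_1,t_1=t_2,G_2$ in $P_k$: if $t_1,t_2$ unify with mgu $\vartheta$, replace $C_1$ by $(H\leftarrow G_1,G_2)\vartheta$; otherwise delete $C_1$. R9 (Disequation replacement), for a clause $C$ of $P_k$: (1) if $C$ is $H\leftarrow G_1,t_1\neq t_2,G_2$ with $t_1,t_2$ not unifiable, replace it by $H\leftarrow G_1,G_2$; (2) if $C$ is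 $H\leftarrow G_1,f(t_1,\dots,t_m)\neq f(u_1,\dots,u_m),G_2$, replace it by the $m$ clauses $H\leftarrow G_1,t_i\neq u_i,G_2$; (3) if $C$ is $H\leftarrow G_1,X\neq X,G_2$, remove it; (4) if $C$ is $H\leftarrow G_1,t\neq X,G_2$, replace it by $H\leftarrow G_1,X\neq t,G_2$; (5) if $C$ is $H\leftarrow G_1,X\neq t_1,G_2,X\neq t_2,G_3$ and there is a bijection $\rho$ from the local variables of $X\neq t_1$ in $C$ onto those of $X\neq t_2$ in $C$ with $t_1\rho=t_2$, replace it by $H\leftarrow G_1,X\neq t_1,G_2,G_3$. (A variable $X$ is a local variable of goal $G$ in clause $H\leftarrow G_1,G,G_2$ iff $X\in vars(G)-vars(H,G_1,G_2)$.) *)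

(* Defs.v *)
From Stdlib Require Import List Arith Relations.
Import ListNotations.

(* A function symbol is identified by (name, arity); the arity of the symbol
   applied in [Fn f ts] is [length ts]. Hence every tree is well formed and
   there are infinitely many function symbols of each arity. *)
Inductive term : Type :=
| Var (x : nat)
| Fn (f : nat) (args : list term).

Fixpoint tvars (t : term) : list nat :=
  match t with
  | Var x => [x]
  | Fn _ ts => flat_map tvars ts
  end.

Definition ground (t : term) : Prop := tvars t = [].

Definition subst := nat -> term.

Fixpoint tsubst (s : subst) (t : term) : term :=
  match t with
  | Var x => s x
  | Fn f ts => Fn f (map (tsubst s) ts)
  end.

Definition subst1 (x : nat) (t : term) : subst :=
  fun y => if Nat.eqb y x then t else Var y.

(* non-basic predicate symbols: (name, arity) *)
Definition pred := (nat * nat)%type.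

(* atoms other than [true]; the goal [true] is the empty list, so that
   "," is associative with neutral element true *)
Inductive lit : Type :=
| LEq (t1 t2 : term)
| LNeq (t1 t2 : term)
| LAt (p : nat) (args : list term).

Definition goal := list lit.
Definition hatom := (nat * list term)%type.
Definition clause := (hatom * goal)%type.
Definition program := list clause.          (* finite set of clauses (membership = In) *)

Definition hd (c : clause) : hatom := fst c.
Definition bd (c : clause) : goal := snd c.

Definition hpred (a : hatom) : pred := (fst a, length (snd a)).

Definition avars (a : hatom) : list nat := flat_map tvars (snd a).
Definition lvars (l : lit) : list nat :=
  match l with
  | LEq t1 t2 => tvars t1 ++ tvars t2
  | LNeq t1 t2 => tvars t1 ++ tvars t2
  | LAt _ ts => flat_map tvars ts
  end.
Definition gvars (g : goal) : list nat := flat_map lvars g.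
Definition cvars (c : clause) : list nat := avars (hd c) ++ gvars (bd c).

Definition asubst (s : subst) (a : hatom) : hatom := (fst a, map (tsubst s) (snd a)).
Definition lsubst (s : subst) (l : lit) : lit :=
  match l with
  | LEq t1 t2 => LEq (tsubst s t1) (tsubst s t2)
  | LNeq t1 t2 => LNeq (tsubst s t1) (tsubst s t2)
  | LAt p ts => LAt p (map (tsubst s) ts)
  end.
Definition gsubst (s : subst) (g : goal) : goal := map (lsubst s) g.
Definition csubst (s : subst) (c : clause) : clause := (asubst s (hd c), gsubst s (bd c)).

Definition lpreds (l : lit) : list pred :=
  match l with LAt p ts => [(p, length ts)] | _ => [] end.
Definition gpreds (g : goal) : list pred := flat_map lpreds g.
Definition cpreds (c : clause) : list pred := hpred (hd c) :: gpreds (bd c).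

Definition occurs_pred (P : program) (q : pred) : Prop :=
  exists c, In c P /\ In q (cpreds c).

Definition unifier (s : subst) (ts us : list term) : Prop :=
  map (tsubst s) ts = map (tsubst s) us.
Definition unifiable (ts us : list term) : Prop := exists s, unifier s ts us.
Definition idempotent (s : subst) : Prop := forall x, tsubst s (s x) = s x.
Definition relevant (s : subst) (V : list nat) : Prop :=
  forall x, s x <> Var x -> In x V /\ (forall y, In y (tvars (s x)) -> In y V).
Definition most_general (s : subst) (ts us : list term) : Prop :=
  forall s', unifier s' ts us -> exists e, forall x, s' x = tsubst e (s x).
Definition mgu (s : subst) (ts us : list term) : Prop :=
  unifier s ts us /\ most_general s ts us /\ idempotent s /\
  relevant s (flat_map tvars ts ++ flat_map tvars us).

Definition renaming (r : nat -> nat) : Prop :=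
  exists r', forall x, r' (r x) = x /\ r (r' x) = x.
Definition rename (r : nat -> nat) (c : clause) : clause :=
  csubst (fun x => Var (r x)) c.

Definition dep1 (P : program) (p q : pred) : Prop :=
  exists c, In c P /\ hpred (hd c) = p /\ In q (gpreds (bd c)).
Definition depends (P : program) (p q : pred) : Prop := clos_trans pred (dep1 P) p q.
Definition depends_cl (P : program) (p : pred) (c : clause) : Prop :=
  hpred (hd c) = p \/ exists q, depends P p q /\ hpred (hd c) = q.

Definition replace (P : program) (C : clause) (news : list clause) (P' : program) : Prop :=
  forall c, In c P' <-> (In c P /\ c <> C) \/ In c news.

(* R1: Ps gives P_0..P_k; P = P_k, P' = P_{k+1} *)
Definition R1_def_intro (Ps : nat -> program) (k : nat) (ds : list clause)
    (P P' : program) : Prop :=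
  exists (newp : nat) (xs : list nat),
    ds <> [] /\ NoDup xs /\
    (forall i, i <= k -> ~ occurs_pred (Ps i) (newp, length xs)) /\
    (forall d, In d ds ->
        hd d = (newp, map Var xs) /\
        (forall q, In q (gpreds (bd d)) -> occurs_pred (Ps 0) q) /\
        (exists q ts, In (LAt q ts) (bd d))) /\
    (forall x, In x xs -> exists d, In d ds /\ In x (gvars (bd d))) /\
    (forall c, In c P' <-> In c P \/ In c ds).

Definition R2_def_elim (p : pred) (P P' : program) : Prop :=
  forall c, In c P' <-> In c P /\ depends_cl P p c.

Definition R3_unfold (C0 : clause) (P P' : program) : Prop :=
  In C0 P /\
  exists (r : nat -> nat) (H : hatom) (G1 G2 : goal) (a : nat) (args : list term)
         (th : clause -> subst),
    renaming r /\
    rename r C0 = (H, G1 ++ LAt a args :: G2) /\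
    (forall c x, In c P -> In x (cvars (rename r C0)) -> ~ In x (cvars c)) /\
    (forall ci, In ci P -> fst (hd ci) = a -> unifiable args (snd (hd ci)) ->
        mgu (th ci) args (snd (hd ci))) /\
    (forall c, In c P' <->
        (In c P /\ c <> C0) \/
        exists ci, In ci P /\ fst (hd ci) = a /\ unifiable args (snd (hd ci)) /\
                   c = csubst (th ci) (H, G1 ++ bd ci ++ G2)).

Definition dummy_clause : clause := ((0, []), []).

Definition R4_fold (Defs : list clause) (ds : list clause) (P P' : program) : Prop :=
  exists (newp : nat) (xs : list nat) (H : hatom) (G1 G2 : goal) (th : subst)
         (cs : nat -> clause) (rs : nat -> nat -> nat),
    ds <> [] /\ NoDup ds /\
    (forall d, In d ds <-> In d Defs /\ hpred (hd d) = (newp, length xs)) /\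
    (forall d, In d ds -> hd d = (newp, map Var xs)) /\
    (forall i, i < length ds ->
        In (cs i) P /\ renaming (rs i) /\
        rename (rs i) (cs i) = (H, G1 ++ gsubst th (bd (nth i ds dummy_clause)) ++ G2)) /\
    (forall d, In d ds -> forall x, In x (gvars (bd d)) -> ~ In x xs ->
        exists y, th x = Var y /\
          ~ In y (avars H ++ gvars G1 ++ gvars G2) /\
          (forall z, In z (gvars (bd d)) -> z <> x -> ~ In y (tvars (th z)))) /\
    (forall c, In c P' <->
        (In c P /\ ~ (exists i, i < length ds /\ c = cs i)) \/
        c = (H, G1 ++ LAt newp (map (tsubst th) (map Var xs)) :: G2)).

Definition R5_subsume (P P' : program) : Prop :=
  exists (C D : clause) (th : subst) (G2 : goal),
    In C P /\ In D P /\ C <> D /\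
    D = csubst th (hd C, bd C ++ G2) /\
    (forall c, In c P' <-> In c P /\ c <> D).

Definition R6_head_gen (P P' : program) : Prop :=
  exists (H : hatom) (B : goal) (x : nat) (t : term),
    let C := (asubst (subst1 x t) H, B) in
    In C P /\ In x (avars H) /\ ~ In x (cvars C) /\
    replace P C [(H, LEq (Var x) t :: B)] P'.

Definition R7_case_split (P P' : program) : Prop :=
  exists (H : hatom) (B : goal) (x : nat) (t : term),
    In (H, B) P /\ ~ In x (tvars t) /\
    replace P (H, B) [csubst (subst1 x t) (H, B); (H, LNeq (Var x) t :: B)] P'.

Definition R8_eq_elim (P P' : program) : Prop :=
  exists (H : hatom) (G1 G2 : goal) (t1 t2 : term),
    let C1 := (H, G1 ++ LEq t1 t2 :: G2) in
    In C1 P /\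
    ((exists th, mgu th [t1] [t2] /\ replace P C1 [csubst th (H, G1 ++ G2)] P') \/
     (~ unifiable [t1] [t2] /\ replace P C1 [] P')).

Definition local_var (x : nat) (H : hatom) (G1 G G2 : goal) : Prop :=
  In x (gvars G) /\ ~ In x (avars H ++ gvars G1 ++ gvars G2).

Definition R9_diseq (P P' : program) : Prop :=
  (exists H G1 G2 t1 t2,
     In (H, G1 ++ LNeq t1 t2 :: G2) P /\ ~ unifiable [t1] [t2] /\
     replace P (H, G1 ++ LNeq t1 t2 :: G2) [(H, G1 ++ G2)] P') \/
  (exists H G1 G2 f ts us,
     In (H, G1 ++ LNeq (Fn f ts) (Fn f us) :: G2) P /\ length ts = length us /\
     replace P (H, G1 ++ LNeq (Fn f ts) (Fn f us) :: G2)
       (map (fun tu => (H, G1 ++ LNeq (fst tu) (snd tu) :: G2)) (combine ts us)) P') \/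
  (exists H G1 G2 x,
     In (H, G1 ++ LNeq (Var x) (Var x) :: G2) P /\
     replace P (H, G1 ++ LNeq (Var x) (Var x) :: G2) [] P') \/
  (exists H G1 G2 t x,
     In (H, G1 ++ LNeq t (Var x) :: G2) P /\
     replace P (H, G1 ++ LNeq t (Var x) :: G2) [(H, G1 ++ LNeq (Var x) t :: G2)] P') \/
  (exists H G1 G2 G3 x t1 t2 (r : nat -> nat),
     let C := (H, G1 ++ LNeq (Var x) t1 :: G2 ++ LNeq (Var x) t2 :: G3) in
     let L1 := fun y => local_var y H G1 [LNeq (Var x) t1] (G2 ++ LNeq (Var x) t2 :: G3) in
     let L2 := fun y => local_var y H (G1 ++ LNeq (Var x) t1 :: G2) [LNeq (Var x) t2] G3 in
     In C P /\
     (forall y, L1 y -> L2 (r y)) /\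
     (forall y z, L1 y -> L1 z -> r y = r z -> y = z) /\
     (forall z, L2 z -> exists y, L1 y /\ r y = z) /\
     (forall y, ~ L1 y -> r y = y) /\
     tsubst (fun y => Var (r y)) t1 = t2 /\
     replace P C [(H, G1 ++ LNeq (Var x) t1 :: G2 ++ G3)] P').

Inductive rule_label : Type :=
| RDef (ds : list clause)
| RElim (p : pred)
| RUnfold (c : clause)
| RFold (ds : list clause)
| RSubsume | RHeadGen | RCaseSplit | REqElim | RDiseq.

Fixpoint defs (lab : nat -> rule_label) (k : nat) : list clause :=
  match k with
  | 0 => []
  | S k' => defs lab k' ++ (match lab k' with RDef ds => ds | _ => [] end)
  end.

Definition tstep (Ps : nat -> program) (lab : nat -> rule_label) (k : nat) : Prop :=
  let P := Ps k in
  let P' := Ps (S k) in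
  match lab k with
  | RDef ds => R1_def_intro Ps k ds P P'
  | RElim p => R2_def_elim p P P'
  | RUnfold c => R3_unfold c P P'
  | RFold ds => R4_fold (defs lab k) ds P P'
  | RSubsume => R5_subsume P P'
  | RHeadGen => R6_head_gen P P'
  | RCaseSplit => R7_case_split P P'
  | REqElim => R8_eq_elim P P'
  | RDiseq => R9_diseq P P'
  end.

Definition transformation_sequence (Ps : nat -> program) (lab : nat -> rule_label)
    (n : nat) : Prop :=
  forall k, k < n -> tstep Ps lab k.

(* interpretations: I p ts means the atom p(ts) is in I *)
Definition interp := nat -> list term -> Prop.
Definition H_interp (I : interp) : Prop := forall p ts, I p ts -> Forall ground ts.

Definition sat_lit (I : interp) (l : lit) : Prop :=
  match l with
  | LEq t1 t2 => t1 = t2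
  | LNeq t1 t2 => t1 <> t2
  | LAt p ts => I p ts
  end.

Definition models (I : interp) (P : program) : Prop :=
  forall c (s : subst), In c P -> (forall x, ground (s x)) ->
    I (fst (hd (csubst s c))) (snd (hd (csubst s c))) \/
    ~ Forall (sat_lit I) (bd (csubst s c)).

Definition least_model (P : program) (M : interp) : Prop :=
  H_interp M /\ models M P /\
  forall I, H_interp I -> models I P -> forall p ts, M p ts -> I p ts.

(* Main.v *)
Require Import Defs.
From Stdlib Require Import List Arith.
Import ListNotations.
From Stdlib Require Import Lia Relations Classical ClassicalEpsilon.
Require Import Defs.

Lemma term_ind' (P : term -> Prop) (HV : forall x, P (Var x))
  (HF : forall f ts, Forall P ts -> P (Fn f ts)) : forall t, P t.
Proof.
  refine (fix F t := match t with Var x => HV x | Fn f ts => HF f ts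
    ((fix G l := match l return Forall P l with [] => Forall_nil _
       | u :: l' => Forall_cons _ (F u) (G l') end) ts) end).
Qed.

Lemma tsubst_comp s t u : tsubst s (tsubst t u) = tsubst (fun x => tsubst s (t x)) u.
Proof.
  induction u using term_ind'; simpl; auto.
  f_equal. rewrite map_map. induction H; simpl; f_equal; auto.
Qed.

Lemma tsubst_ext s s' u : (forall x, In x (tvars u) -> s x = s' x) -> tsubst s u = tsubst s' u.
Proof.
  induction u using term_ind'; simpl; intros E; auto.
  f_equal. induction H; simpl in *; auto.
  f_equal.
  - apply H. intros; apply E; apply in_or_app; auto.
  - apply IHForall. intros; apply E; apply in_or_app; auto.
Qed.

Lemma tsubst_id u : tsubst Var u = u.
Proof.
  induction u using term_ind'; simpl; auto. f_equal. induction H; simpl; f_equal; auto.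
Qed.

Lemma tvars_tsubst s u y : In y (tvars (tsubst s u)) <-> exists x, In x (tvars u) /\ In y (tvars (s x)).
Proof.
  induction u using term_ind'; simpl.
  - split; [intros; exists x; auto | intros [z [[<-|[]] Hz]]; auto].
  - rewrite flat_map_concat_map, map_map, <- flat_map_concat_map.
    induction H; simpl. { split; [intros []| intros [? [[] _]]]. }
    rewrite !in_app_iff, IHForall, H. split.
    + intros [[z [? ?]]|[z [? ?]]]; exists z; rewrite in_app_iff; auto.
    + intros [z [Hz ?]]; rewrite in_app_iff in Hz; destruct Hz; [left|right]; eauto.
Qed.

Definition gr (s : subst) := forall x, ground (s x).

Lemma nil_iff {A} (l : list A) : l = [] <-> forall y, ~ In y l.
Proof. destruct l as [|a l]; simpl; split. - intros _ y []. - auto. - intros E; discriminate. - intros Hn; exfalso; apply (Hn a); auto. Qed.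

Lemma ground_tsubst s u : gr s -> ground (tsubst s u).
Proof.
  unfold ground; intros G. apply nil_iff. intros y Hy. apply tvars_tsubst in Hy.
  destruct Hy as [x [_ Hx]]. rewrite (G x) in Hx. destruct Hx.
Qed.

Lemma tsubst_ground s u : ground u -> tsubst s u = u.
Proof.
  intros G. rewrite <- (tsubst_id u) at 2. apply tsubst_ext. unfold ground in G.
  rewrite G. intros _ [].
Qed.

Lemma gr_comp s t : gr s -> gr (fun x => tsubst s (t x)).
Proof. intros G x. apply ground_tsubst; auto. Qed.

Lemma map_tsubst_comp s t ts : map (tsubst s) (map (tsubst t) ts) = map (tsubst (fun x => tsubst s (t x))) ts.
Proof. rewrite map_map; apply map_ext; intros; apply tsubst_comp. Qed.

Lemma map_tsubst_ext s s' ts : (forall x, In x (flat_map tvars ts) -> s x = s' x) ->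
  map (tsubst s) ts = map (tsubst s') ts.
Proof.
  intros E; apply map_ext_in; intros u Hu; apply tsubst_ext; intros x Hx; apply E.
  apply in_flat_map; eauto.
Qed.

Lemma lsubst_comp s t l : lsubst s (lsubst t l) = lsubst (fun x => tsubst s (t x)) l.
Proof. destruct l; simpl; f_equal; try apply tsubst_comp; apply map_tsubst_comp. Qed.

Lemma lsubst_ext s s' l : (forall x, In x (lvars l) -> s x = s' x) -> lsubst s l = lsubst s' l.
Proof.
  destruct l; simpl; intros E; f_equal; try (apply tsubst_ext; intros; apply E; apply in_or_app; auto).
  apply map_tsubst_ext; auto.
Qed.

Lemma gsubst_comp s t g : gsubst s (gsubst t g) = gsubst (fun x => tsubst s (t x)) g.
Proof. unfold gsubst; rewrite map_map; apply map_ext; intros; apply lsubst_comp. Qed.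

Lemma gsubst_ext s s' g : (forall x, In x (gvars g) -> s x = s' x) -> gsubst s g = gsubst s' g.
Proof.
  intros E; unfold gsubst; apply map_ext_in; intros l Hl; apply lsubst_ext; intros x Hx; apply E.
  unfold gvars; apply in_flat_map; eauto.
Qed.

Lemma gsubst_app s g1 g2 : gsubst s (g1 ++ g2) = gsubst s g1 ++ gsubst s g2.
Proof. apply map_app. Qed.

Lemma gvars_app g1 g2 : gvars (g1 ++ g2) = gvars g1 ++ gvars g2.
Proof. unfold gvars; apply flat_map_app. Qed.

Lemma asubst_comp s t a : asubst s (asubst t a) = asubst (fun x => tsubst s (t x)) a.
Proof. unfold asubst; simpl; f_equal; apply map_tsubst_comp. Qed.

Lemma asubst_ext s s' a : (forall x, In x (avars a) -> s x = s' x) -> asubst s a = asubst s' a.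
Proof. intros; unfold asubst; f_equal; apply map_tsubst_ext; auto. Qed.

Lemma csubst_comp s t c : csubst s (csubst t c) = csubst (fun x => tsubst s (t x)) c.
Proof. unfold csubst; simpl; f_equal; [apply asubst_comp|apply gsubst_comp]. Qed.

Lemma csubst_ext s s' c : (forall x, In x (cvars c) -> s x = s' x) -> csubst s c = csubst s' c.
Proof.
  intros E; unfold csubst, cvars in *; f_equal; [apply asubst_ext|apply gsubst_ext];
  intros; apply E; apply in_or_app; auto.
Qed.

Lemma csubst_ext_all s s' c : (forall x, s x = s' x) -> csubst s c = csubst s' c.
Proof. intros; apply csubst_ext; auto. Qed.

Lemma rename_inst r s c : csubst s (rename r c) = csubst (fun x => s (r x)) c.
Proof. unfold rename; rewrite csubst_comp; reflexivity. Qed.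

Lemma renaming_inv r s : renaming r -> exists s', (forall x, s' (r x) = s x) /\ (gr s -> gr s').
Proof.
  intros [r' H]. exists (fun y => s (r' y)). split.
  - intros x; destruct (H x) as [-> _]; auto.
  - intros G y; apply G.
Qed.

Lemma gr_ren s (r : nat -> nat) : gr s -> gr (fun x => s (r x)).
Proof. intros G x; apply G. Qed.

Fixpoint sumw (w : hatom -> nat) (g : goal) : nat :=
  match g with
  | [] => 0
  | LAt q ts :: g' => w (q, ts) + sumw w g'
  | _ :: g' => sumw w g'
  end.

Lemma sumw_app w g1 g2 : sumw w (g1 ++ g2) = sumw w g1 + sumw w g2.
Proof. induction g1 as [|[] g1 IH]; simpl; try rewrite IH; lia. Qed.

Lemma map_eq_in {A B} (f g : A -> B) l : map f l = map g l -> forall x, In x l -> f x = g x.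
Proof. induction l; simpl; intros E x Hx; [destruct Hx|]. injection E; intros. destruct Hx; subst; auto. Qed.


Definition holds (M : interp) (A : hatom) : Prop := M (fst A) (snd A).

Definition supp (M : interp) (w : hatom -> nat) (P : program) (A : hatom) (e : nat) : Prop :=
  exists c s, In c P /\ gr s /\ hd (csubst s c) = A /\ Forall (sat_lit M) (bd (csubst s c)) /\
    sumw w (bd (csubst s c)) + e <= w A.

Lemma models_inst M P c s : models M P -> In c P -> gr s ->
  Forall (sat_lit M) (bd (csubst s c)) -> holds M (hd (csubst s c)).
Proof. intros HM Hc Gs Hb. destruct (HM c s Hc Gs) as [H|H]; [exact H|contradiction]. Qed.

Lemma models_intro M P : (forall c s, In c P -> gr s -> Forall (sat_lit M) (bd (csubst s c)) ->
  holds M (hd (csubst s c))) -> models M P.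
Proof.
  intros H c s Hc Gs. destruct (classic (Forall (sat_lit M) (bd (csubst s c)))) as [B|B]; auto.
  left; apply H; auto.
Qed.

Lemma models_rename M P c r s : models M P -> In c P -> gr s ->
  Forall (sat_lit M) (bd (csubst s (rename r c))) -> holds M (hd (csubst s (rename r c))).
Proof. intros. rewrite rename_inst in *. apply (models_inst M P); auto. intros x; auto. Qed.

Lemma supp_replace M w P C news P' A e : replace P C news P' -> supp M w P A e ->
  (forall s, gr s -> Forall (sat_lit M) (bd (csubst s C)) -> exists c' s', In c' news /\ gr s' /\
     hd (csubst s' c') = hd (csubst s C) /\ Forall (sat_lit M) (bd (csubst s' c')) /\
     sumw w (bd (csubst s' c')) <= sumw w (bd (csubst s C))) -> supp M w P' A e.
Proof.
  intros R [c [s [Hc [Gs [Hh [Hb Hw]]]]]] K.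
  destruct (classic (c = C)) as [->|N].
  - destruct (K s Gs Hb) as [c' [s' [Hc' [Gs' [Hh' [Hb' Hw']]]]]].
    exists c', s'; repeat split; auto. apply R; auto. congruence. lia.
  - exists c, s; repeat split; auto. apply R; auto.
Qed.

Lemma models_replace M P C news P' : replace P C news P' -> models M P ->
  (forall c s, In c news -> gr s -> Forall (sat_lit M) (bd (csubst s c)) -> holds M (hd (csubst s c))) ->
  models M P'.
Proof.
  intros R HM K. apply models_intro. intros c s Hc Gs Hb. apply R in Hc.
  destruct Hc as [[Hc _]|Hc]; [apply (models_inst M P)|apply K]; auto.
Qed.

Definition g0 : subst := fun _ => Fn 0 [].
Lemma gr_g0 : gr g0. Proof. intros x; reflexivity. Qed.

Lemma mgu_inst (th e s : subst) : (forall x, s x = tsubst e (th x)) -> gr s ->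
  exists tau, gr tau /\ forall x, tsubst tau (th x) = s x.
Proof.
  intros E G. exists (fun y => tsubst g0 (e y)). split.
  - intros y; apply ground_tsubst, gr_g0.
  - intros x. rewrite <- tsubst_comp, <- E. apply tsubst_ground, G.
Qed.

Lemma Forall_app_iff {A} (P : A -> Prop) l1 l2 : Forall P (l1 ++ l2) <-> Forall P l1 /\ Forall P l2.
Proof. apply Forall_app. Qed.

Section Easy.
Variable M : interp.
Variable w : hatom -> nat.

Lemma R5_models P P' : R5_subsume P P' -> models M P -> models M P'.
Proof.
  intros [C [D [th [G2 [_ [_ [_ [_ HP]]]]]]]] HM c s Hc Gs. apply HP in Hc. apply HM; tauto.
Qed.

Lemma R5_supp P P' A e : R5_subsume P P' -> supp M w P A e -> supp M w P' A e.
Proof.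
  intros [C [D [th [G2 [HC [HD [NCD [ED HP]]]]]]]] [c [s [Hc [Gs [Hh [Hb Hw]]]]]].
  destruct (classic (c = D)) as [->|N].
  - exists C, (fun x => tsubst s (th x)). rewrite ED, csubst_comp in *.
    unfold csubst in *; simpl in *. rewrite gsubst_app, Forall_app_iff, sumw_app in *.
    repeat split; try tauto. apply HP; split; auto. apply gr_comp; auto. lia.
  - exists c, s; repeat split; auto. apply HP; auto.
Qed.

Lemma avars_subst1 H x t y : In x (avars H) -> In y (tvars t) -> In y (avars (asubst (subst1 x t) H)).
Proof.
  unfold avars, asubst; simpl. intros Hx Hy. apply in_flat_map in Hx as [u [Hu Hxu]].
  apply in_flat_map. exists (tsubst (subst1 x t) u). split. apply in_map; auto.
  apply tvars_tsubst. exists x. unfold subst1. rewrite Nat.eqb_refl. auto.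
Qed.

Lemma R6_models P P' : R6_head_gen P P' -> models M P -> models M P'.
Proof.
  intros [H [B [x [t [HC [Hx [Hnx R]]]]]]] HM. eapply models_replace; eauto.
  intros c s [<-|[]] Gs Hb. unfold csubst in *; simpl in *. inversion Hb as [|? ? Heq Hb']; subst.
  simpl in Heq.
  assert (E : asubst s H = asubst (fun y => tsubst s (subst1 x t y)) H).
  { apply asubst_ext. intros y _. unfold subst1. destruct (Nat.eqb_spec y x); subst; auto. }
  rewrite E, <- asubst_comp.
  change (holds M (hd (csubst s (asubst (subst1 x t) H, B)))). apply (models_inst M P); auto.
Qed.

Lemma R6_supp P P' A e : R6_head_gen P P' -> supp M w P A e -> supp M w P' A e.
Proof.
  intros [H [B [x [t [HC [Hx [Hnx R]]]]]]] S. eapply supp_replace; eauto.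
  intros s Gs Hb. exists (H, LEq (Var x) t :: B), (fun y => if Nat.eqb y x then tsubst s t else s y).
  assert (Nt : ~ In x (tvars t)).
  { intros Ht. apply Hnx. unfold cvars; simpl. apply in_or_app; left. apply avars_subst1; auto. }
  assert (EB : gsubst (fun y => if Nat.eqb y x then tsubst s t else s y) B = gsubst s B).
  { apply gsubst_ext. intros y Hy. destruct (Nat.eqb_spec y x); subst; auto.
    exfalso; apply Hnx; unfold cvars; simpl; apply in_or_app; auto. }
  assert (Et : tsubst (fun y => if Nat.eqb y x then tsubst s t else s y) t = tsubst s t).
  { apply tsubst_ext. intros y Hy. destruct (Nat.eqb_spec y x); subst; tauto. }
  unfold csubst; simpl. rewrite EB, Et, Nat.eqb_refl. repeat split.
  - left; auto.
  - intros y. destruct (Nat.eqb y x); [apply ground_tsubst|]; auto.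
  - rewrite asubst_comp. apply asubst_ext. intros y _. unfold subst1.
    destruct (y =? x); reflexivity.
  - constructor; [reflexivity|]. exact Hb.
  - simpl. lia.
Qed.

Lemma R7_models P P' : R7_case_split P P' -> models M P -> models M P'.
Proof.
  intros [H [B [x [t [HC [_ R]]]]]] HM. eapply models_replace; eauto.
  intros c s [<-|[<-|[]]] Gs Hb.
  - rewrite csubst_comp in *. apply (models_inst M P); auto. apply gr_comp; auto.
  - unfold csubst in *; simpl in *. inversion Hb; subst.
    change (holds M (hd (csubst s (H, B)))). apply (models_inst M P); auto.
Qed.

Lemma R7_supp P P' A e : R7_case_split P P' -> supp M w P A e -> supp M w P' A e.
Proof.
  intros [H [B [x [t [HC [_ R]]]]]] S. eapply supp_replace; eauto.
  intros s Gs Hb. destruct (classic (s x = tsubst s t)) as [E|E].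
  - exists (csubst (subst1 x t) (H, B)), s. rewrite csubst_comp.
    assert (Eq : csubst (fun y => tsubst s (subst1 x t y)) (H, B) = csubst s (H, B)).
    { apply csubst_ext_all. intros y; unfold subst1; destruct (Nat.eqb_spec y x); subst; auto. }
    rewrite Eq. repeat split; auto. left; auto.
  - exists (H, LNeq (Var x) t :: B), s. unfold csubst in *; simpl in *. repeat split; auto.
    all: try (right; left; auto).
Qed.

Lemma R8_models P P' : R8_eq_elim P P' -> models M P -> models M P'.
Proof.
  intros [H [G1 [G2 [t1 [t2 [HC [[th [[Hu _] R]]|[_ R]]]]]]]] HM; eapply models_replace; eauto.
  2: intros ? ? [].
  intros c s [<-|[]] Gs Hb. rewrite csubst_comp in *.
  set (rho := fun x => tsubst s (th x)) in *.
  change (holds M (hd (csubst rho (H, G1 ++ LEq t1 t2 :: G2)))). apply (models_inst M P); auto.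
  apply gr_comp; auto. unfold csubst in *; simpl in *. rewrite !gsubst_app in *.
  apply Forall_app_iff in Hb as [Hb1 Hb2]. apply Forall_app_iff; split; auto. constructor; auto.
  simpl. unfold unifier in Hu; simpl in Hu. injection Hu; intros E. unfold rho.
  rewrite <- !tsubst_comp, E; auto.
Qed.

Lemma R8_supp P P' A e : R8_eq_elim P P' -> supp M w P A e -> supp M w P' A e.
Proof.
  intros [H [G1 [G2 [t1 [t2 [HC [[th [[Hu [Hmg _]] R]]|[Nu R]]]]]]]] S; eapply supp_replace; eauto.
  - intros s Gs Hb. unfold csubst in Hb; simpl in Hb. rewrite gsubst_app in Hb.
    apply Forall_app_iff in Hb as [Hb1 Hb2]. inversion Hb2 as [|? ? Heq Hb3]; subst. simpl in Heq.
    destruct (Hmg s) as [e' E]. { unfold unifier; simpl; rewrite Heq; auto. }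
    destruct (mgu_inst th e' s E Gs) as [tau [Gt Et]].
    exists (csubst th (H, G1 ++ G2)), tau. rewrite csubst_comp.
    assert (Eq : csubst (fun x => tsubst tau (th x)) (H, G1 ++ G2) = csubst s (H, G1 ++ G2)).
    { apply csubst_ext_all; auto. } rewrite Eq.
    unfold csubst; simpl. rewrite !gsubst_app, !sumw_app. simpl. repeat split; auto.
    all: try (left; reflexivity); try (apply Forall_app_iff; auto); try lia.
  - intros s Gs Hb. exfalso. unfold csubst in Hb; simpl in Hb. rewrite gsubst_app in Hb.
    apply Forall_app_iff in Hb as [_ Hb2]. inversion Hb2 as [|? ? Heq _]; subst. simpl in Heq.
    apply Nu. exists s. unfold unifier; simpl; rewrite Heq; auto.
Qed.

End Easy.


Lemma combine_map_eq {T U} (g : T -> U) ts us a b : In (a, b) (combine ts us) ->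
  map g ts = map g us -> g a = g b.
Proof.
  revert us; induction ts as [|t ts IH]; intros [|u us]; simpl; try tauto.
  intros [E|Hi] Em; injection Em; intros; [injection E; intros; subst; auto|eauto].
Qed.

Lemma combine_map_neq {T U} (g : T -> U) ts us : length ts = length us ->
  map g ts <> map g us -> exists a b, In (a, b) (combine ts us) /\ g a <> g b.
Proof.
  revert us; induction ts as [|t ts IH]; intros [|u us]; simpl; try discriminate; intros L N.
  - contradiction.
  - destruct (classic (g t = g u)) as [E|E].
    + destruct (IH us) as [a [b [Hi Hn]]]; auto. intros E'; apply N; rewrite E, E'; auto.
      exists a, b; auto.
    + exists t, u; auto.
Qed.

Lemma gsubst_cons s l g : gsubst s (l :: g) = lsubst s l :: gsubst s g.
Proof. reflexivity. Qed.

Lemma bd_csubst s H G : bd (csubst s (H, G)) = gsubst s G. Proof. reflexivity. Qed.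
Lemma hd_csubst s H G : hd (csubst s (H, G)) = asubst s H. Proof. reflexivity. Qed.

Ltac inapp := unfold cvars in *; rewrite ?gvars_app in *; simpl in *; rewrite ?in_app_iff in *; simpl in *; rewrite ?in_app_iff in *; tauto.

Section R9.
Variable M : interp.
Variable w : hatom -> nat.

Lemma R9_models P P' : R9_diseq P P' -> models M P -> models M P'.
Proof.
  intros R9 HM. destruct R9 as [R|[R|[R|[R|R]]]].
  - destruct R as [H [G1 [G2 [t1 [t2 [HC [Nu R]]]]]]]. eapply models_replace; eauto.
    intros c s [<-|[]] Gs Hb. unfold csubst in *; simpl in *. rewrite gsubst_app in Hb.
    apply Forall_app_iff in Hb as [Hb1 Hb2].
    change (holds M (hd (csubst s (H, G1 ++ LNeq t1 t2 :: G2)))). apply (models_inst M P); auto.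
    unfold csubst; simpl. rewrite gsubst_app. apply Forall_app_iff; split; auto.
    constructor; auto. simpl. intros E. apply Nu. exists s. unfold unifier; simpl; rewrite E; auto.
  - destruct R as [H [G1 [G2 [f [ts [us [HC [L R]]]]]]]]. eapply models_replace; eauto.
    intros c s Hc Gs Hb. apply in_map_iff in Hc as [[a b] [<- Hab]]. simpl in *.
    unfold csubst in *; simpl in *. rewrite gsubst_app in Hb.
    apply Forall_app_iff in Hb as [Hb1 Hb2]. inversion Hb2 as [|? ? Hn Hb3]; subst. simpl in Hn.
    change (holds M (hd (csubst s (H, G1 ++ LNeq (Fn f ts) (Fn f us) :: G2)))).
    apply (models_inst M P); auto.
    unfold csubst; simpl. rewrite gsubst_app. apply Forall_app_iff; split; auto.
    constructor; auto. simpl. intros E. injection E; intros E'. apply Hn.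
    eapply combine_map_eq; eauto.
  - destruct R as [H [G1 [G2 [x [HC R]]]]]. eapply models_replace; eauto. intros ? ? [].
  - destruct R as [H [G1 [G2 [t [x [HC R]]]]]]. eapply models_replace; eauto.
    intros c s [<-|[]] Gs Hb. unfold csubst in *; simpl in *. rewrite gsubst_app in Hb.
    apply Forall_app_iff in Hb as [Hb1 Hb2]. inversion Hb2 as [|? ? Hn Hb3]; subst. simpl in Hn.
    change (holds M (hd (csubst s (H, G1 ++ LNeq t (Var x) :: G2)))). apply (models_inst M P); auto.
    unfold csubst; simpl. rewrite gsubst_app. apply Forall_app_iff; split; auto.
    constructor; auto. simpl. auto.
  - destruct R as [H [G1 [G2 [G3 [x [t1 [t2 [r R]]]]]]]]. cbv zeta in R.
    destruct R as [HC [R1 [Rinj [Rsurj [Rid [Et R]]]]]].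
    set (L1 := fun y => local_var y H G1 [LNeq (Var x) t1] (G2 ++ LNeq (Var x) t2 :: G3)) in *.
    set (L2 := fun y => local_var y H (G1 ++ LNeq (Var x) t1 :: G2) [LNeq (Var x) t2] G3) in *.
    eapply models_replace; eauto.
    intros c s [<-|[]] Gs Hb.
    set (s' := fun y => match excluded_middle_informative (exists y0, L1 y0 /\ r y0 = y) with
                        | left Hy => s (proj1_sig (constructive_indefinite_description _ Hy))
                        | right _ => s y end).
    assert (S1 : forall y, ~ L2 y -> s' y = s y).
    { intros y Ny. unfold s'. destruct excluded_middle_informative as [Hy|]; auto.
      exfalso. destruct Hy as [y0 [Hy0 <-]]. apply Ny, R1; auto. }
    assert (S2 : forall y0, L1 y0 -> s' (r y0) = s y0).
    { intros y0 Hy0. unfold s'. destruct excluded_middle_informative as [Hy|Hy].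
      - destruct constructive_indefinite_description as [y1 [Hy1 E]]; simpl.
        rewrite (Rinj y1 y0); auto.
      - exfalso; apply Hy; eauto. }
    assert (NL2 : forall y, In y (avars H ++ gvars (G1 ++ LNeq (Var x) t1 :: G2) ++ gvars G3) -> ~ L2 y).
    { intros y Hy [_ Hn]. auto. }
    assert (Gs' : gr s').
    { intros y. unfold s'. destruct excluded_middle_informative; auto. }
    assert (Et2 : tsubst s' t2 = tsubst s t1).
    { rewrite <- Et, tsubst_comp. apply tsubst_ext. intros z Hz. simpl.
      destruct (classic (L1 z)) as [Lz|Lz]. - apply S2; auto.
      - rewrite Rid; auto. apply S1, NL2. clear -Hz. inapp. }
    assert (Ex : s' x = s x).
    { apply S1, NL2. clear. inapp. }
    assert (EH : asubst s' H = asubst s H).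
    { apply asubst_ext. intros y Hy. apply S1, NL2. clear -Hy. inapp. }
    assert (EG : forall G, (forall y, In y (gvars G) -> In y (avars H ++ gvars (G1 ++ LNeq (Var x) t1 :: G2) ++ gvars G3)) -> gsubst s' G = gsubst s G).
    { intros G HG. apply gsubst_ext. intros y Hy. apply S1, NL2, HG; auto. }
    assert (Ht1 : tsubst s' t1 = tsubst s t1).
    { apply tsubst_ext. intros y Hy. apply S1, NL2. clear -Hy. inapp. }
    change (holds M (asubst s H)). rewrite <- EH.
    change (holds M (hd (csubst s' (H, G1 ++ LNeq (Var x) t1 :: G2 ++ LNeq (Var x) t2 :: G3)))).
    apply (models_inst M P); auto.
    change (Forall (sat_lit M) (gsubst s (G1 ++ LNeq (Var x) t1 :: G2 ++ G3))) in Hb.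
    change (Forall (sat_lit M) (gsubst s' (G1 ++ LNeq (Var x) t1 :: G2 ++ LNeq (Var x) t2 :: G3))).
    rewrite !gsubst_app, !gsubst_cons, !gsubst_app, ?gsubst_cons in *.
    apply Forall_app_iff in Hb as [Hb1 Hb2]. apply Forall_cons_iff in Hb2 as [Hn Hb3].
    apply Forall_app_iff in Hb3 as [Hb4 Hb5]. simpl in Hn. simpl lsubst.
    rewrite (EG G1), (EG G2), (EG G3), Ex, Et2, Ht1.
    2,3,4: intros y Hy; clear -Hy; inapp.
    apply Forall_app_iff; split; auto. constructor; auto. apply Forall_app_iff; split; auto.
Qed.

Lemma R9_supp P P' A e : R9_diseq P P' -> supp M w P A e -> supp M w P' A e.
Proof.
  intros R9 S. destruct R9 as [R|[R|[R|[R|R]]]].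
  - destruct R as [H [G1 [G2 [t1 [t2 [HC [Nu R]]]]]]]. eapply supp_replace; eauto.
    intros s Gs Hb. exists (H, G1 ++ G2), s. unfold csubst in *; simpl in *.
    rewrite !gsubst_app, !sumw_app in *. simpl in *.
    apply Forall_app_iff in Hb as [Hb1 Hb2]. inversion Hb2; subst.
    repeat split; auto. apply Forall_app_iff; auto.
  - destruct R as [H [G1 [G2 [f [ts [us [HC [L R]]]]]]]]. eapply supp_replace; eauto.
    intros s Gs Hb. unfold csubst in Hb; simpl in Hb. rewrite gsubst_app in Hb.
    apply Forall_app_iff in Hb as [Hb1 Hb2]. inversion Hb2 as [|? ? Hn Hb3]; subst. simpl in Hn.
    destruct (combine_map_neq (tsubst s) ts us L) as [a [b [Hab Nab]]].
    { intros E; apply Hn; rewrite E; auto. }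
    exists (H, G1 ++ LNeq a b :: G2), s. split; [|split; [|split; [|split]]].
    + apply in_map_iff. exists (a, b); auto.
    + auto.
    + reflexivity.
    + rewrite bd_csubst, gsubst_app, gsubst_cons. apply Forall_app_iff; split; auto; constructor; auto.
    + rewrite !bd_csubst, !gsubst_app, !gsubst_cons, !sumw_app. simpl. lia.
  - destruct R as [H [G1 [G2 [x [HC R]]]]]. eapply supp_replace; eauto.
    intros s Gs Hb. exfalso. unfold csubst in Hb; simpl in Hb. rewrite gsubst_app in Hb.
    apply Forall_app_iff in Hb as [Hb1 Hb2]. inversion Hb2 as [|? ? Hn Hb3]; subst. apply Hn; auto.
  - destruct R as [H [G1 [G2 [t [x [HC R]]]]]]. eapply supp_replace; eauto.
    intros s Gs Hb. unfold csubst in Hb; simpl in Hb. rewrite gsubst_app in Hb.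
    apply Forall_app_iff in Hb as [Hb1 Hb2]. inversion Hb2 as [|? ? Hn Hb3]; subst. simpl in Hn.
    exists (H, G1 ++ LNeq (Var x) t :: G2), s. split; [|split; [|split; [|split]]].
    + left; auto.
    + auto.
    + reflexivity.
    + rewrite bd_csubst, gsubst_app, gsubst_cons. apply Forall_app_iff; split; auto; constructor; simpl; auto.
    + rewrite !bd_csubst, !gsubst_app, !gsubst_cons, !sumw_app. simpl. lia.
  - destruct R as [H [G1 [G2 [G3 [x [t1 [t2 [r R]]]]]]]]. cbv zeta in R.
    destruct R as [HC [R1 [Rinj [Rsurj [Rid [Et R]]]]]].
    eapply supp_replace; eauto.
    intros s Gs Hb. exists (H, G1 ++ LNeq (Var x) t1 :: G2 ++ G3), s.
    rewrite !bd_csubst, !hd_csubst in *.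
    rewrite !gsubst_app, !gsubst_cons, !gsubst_app, ?gsubst_cons in *.
    apply Forall_app_iff in Hb as [Hb1 Hb2]. apply Forall_cons_iff in Hb2 as [Hn Hb3].
    apply Forall_app_iff in Hb3 as [Hb4 Hb5]. apply Forall_cons_iff in Hb5 as [Hn2 Hb6].
    rewrite !sumw_app. simpl. rewrite !sumw_app. simpl.
    split; [|split; [|split; [|split]]].
    + left; auto.
    + auto.
    + reflexivity.
    + apply Forall_app_iff; split; auto. constructor; auto. apply Forall_app_iff; split; auto.
    + lia.
Qed.
End R9.


Lemma cvars_rc H G1 G2 y : In y (avars H ++ gvars G1 ++ gvars G2) -> In y (cvars (H, G1 ++ G2)).
Proof. unfold cvars; simpl. rewrite gvars_app. auto. Qed.

Lemma atom_inst_pred s g q ts : In (LAt q ts) (gsubst s g) -> In (q, length ts) (gpreds g).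
Proof.
  unfold gsubst. intros Hi. apply in_map_iff in Hi as [l [El Hl]].
  destruct l; simpl in El; try discriminate. injection El; intros <- <-.
  unfold gpreds. apply in_flat_map. exists (LAt p args). split; auto. simpl. rewrite length_map; auto.
Qed.

Section R3.
Variable M : interp.
Variable w : hatom -> nat.

Lemma R3_models C0 P P' : R3_unfold C0 P P' -> models M P -> models M P'.
Proof.
  intros [HC0 [r [H [G1 [G2 [a [args [th [Hr [Erc [Hdis [Hmgu HP]]]]]]]]]]]] HM.
  apply models_intro. intros c s Hc Gs Hb. apply HP in Hc.
  destruct Hc as [[Hc _]|[ci [Hci [Ea [Hun ->]]]]]; [apply (models_inst M P); auto|].
  destruct (Hmgu ci Hci Ea Hun) as [Hu _].
  rewrite csubst_comp in *. set (rho := fun x => tsubst s (th ci x)) in *.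
  assert (Gr : gr rho) by (apply gr_comp; auto).
  rewrite bd_csubst, !gsubst_app in Hb. apply Forall_app_iff in Hb as [Hb1 Hb2].
  apply Forall_app_iff in Hb2 as [Hb2 Hb3].
  assert (Hci' : holds M (hd (csubst rho ci))) by (apply (models_inst M P); auto).
  rewrite hd_csubst. unfold csubst in Hci'; simpl in Hci'. unfold holds in Hci'; simpl in Hci'.
  change (holds M (hd (csubst rho (H, G1 ++ LAt a args :: G2)))).
  rewrite <- Erc. apply (models_rename M P); auto. rewrite Erc, bd_csubst, gsubst_app, gsubst_cons.
  apply Forall_app_iff; split; auto. constructor; auto. simpl.
  unfold unifier in Hu. unfold rho. rewrite <- map_tsubst_comp, Hu, map_tsubst_comp.
  rewrite Ea in Hci'. exact Hci'.
Qed.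

Lemma R3_supp_C0 C0 P P' s e : R3_unfold C0 P P' -> gr s -> Forall (sat_lit M) (bd (csubst s C0)) ->
  (forall q ts, In (LAt q ts) (bd (csubst s C0)) -> supp M w P (q, ts) e) ->
  exists c' s', In c' P' /\ gr s' /\ hd (csubst s' c') = hd (csubst s C0) /\
    Forall (sat_lit M) (bd (csubst s' c')) /\ sumw w (bd (csubst s' c')) + e <= sumw w (bd (csubst s C0)).
Proof.
  intros [HC0 [r [H [G1 [G2 [a [args [th [Hr [Erc [Hdis [Hmgu HP]]]]]]]]]]]] Gs Hb HS.
  destruct (renaming_inv r s Hr) as [s' [Es' Gs']]. specialize (Gs' Gs).
  assert (Ei : csubst s C0 = csubst s' (H, G1 ++ LAt a args :: G2)).
  { rewrite <- Erc, rename_inst. apply csubst_ext_all. intros; rewrite Es'; auto. }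
  rewrite Ei in *. rewrite bd_csubst, gsubst_app, gsubst_cons in Hb, HS.
  apply Forall_app_iff in Hb as [Hb1 Hb2]. apply Forall_cons_iff in Hb2 as [Ha Hb3].
  destruct (HS a (map (tsubst s') args)) as [ci [s2 [Hci [Gs2 [Eh [Hbi Hwi]]]]]].
  { apply in_or_app; right; left; reflexivity. }
  assert (Ea : fst (hd ci) = a).
  { unfold csubst, asubst in Eh; simpl in Eh. injection Eh; auto. }
  assert (Eargs : map (tsubst s2) (snd (hd ci)) = map (tsubst s') args).
  { unfold csubst, asubst in Eh; simpl in Eh. injection Eh; auto. }
  set (rc := (H, G1 ++ LAt a args :: G2)) in *.
  set (sg := fun x => if in_dec Nat.eq_dec x (cvars rc) then s' x else s2 x).
  assert (E1 : forall x, In x (cvars rc) -> sg x = s' x).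
  { intros x Hx; unfold sg; destruct in_dec; tauto. }
  assert (E2 : forall x, In x (cvars ci) -> sg x = s2 x).
  { intros x Hx; unfold sg; destruct in_dec as [Hx'|]; auto. exfalso. apply (Hdis ci x Hci); auto.
    rewrite Erc; auto. }
  assert (Gsg : gr sg) by (intros x; unfold sg; destruct in_dec; auto).
  assert (Hun : unifier sg args (snd (hd ci))).
  { unfold unifier. rewrite (map_tsubst_ext sg s'), (map_tsubst_ext sg s2); auto.
    - intros x Hx; apply E2. unfold cvars, avars. apply in_or_app; auto.
    - intros x Hx; apply E1. unfold rc, cvars; simpl. rewrite gvars_app. simpl.
      rewrite !in_app_iff; tauto. }
  assert (Hun' : unifiable args (snd (hd ci))) by (exists sg; auto).
  destruct (Hmgu ci Hci Ea Hun') as [_ [Hmg _]].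
  destruct (Hmg sg Hun) as [e' Ee].
  destruct (mgu_inst (th ci) e' sg Ee Gsg) as [tau [Gt Et]].
  exists (csubst (th ci) (H, G1 ++ bd ci ++ G2)), tau.
  assert (Ec : csubst tau (csubst (th ci) (H, G1 ++ bd ci ++ G2)) =
               (asubst s' H, gsubst s' G1 ++ gsubst s2 (bd ci) ++ gsubst s' G2)).
  { rewrite csubst_comp. rewrite (csubst_ext_all _ sg); [|intros; apply Et].
    unfold csubst; simpl. rewrite !gsubst_app. f_equal; [|f_equal; [|f_equal]].
    - apply asubst_ext; intros; apply E1. unfold rc, cvars; simpl. apply in_or_app; auto.
    - apply gsubst_ext; intros; apply E1. unfold rc, cvars; simpl. rewrite gvars_app.
      rewrite !in_app_iff; tauto.
    - apply gsubst_ext; intros; apply E2. unfold cvars. apply in_or_app; auto.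
    - apply gsubst_ext; intros; apply E1. unfold rc, cvars; simpl. rewrite gvars_app. simpl.
      rewrite !in_app_iff; tauto. }
  rewrite Ec. split; [|split; [|split; [|split]]].
  - apply HP. right. exists ci; auto.
  - auto.
  - reflexivity.
  - simpl. apply Forall_app_iff; split; auto. apply Forall_app_iff; split; auto.
  - simpl. rewrite gsubst_app, gsubst_cons, !sumw_app. simpl.
    change (bd (csubst s2 ci)) with (gsubst s2 (bd ci)) in Hwi. lia.
Qed.

End R3.


Section R4.
Variable M : interp.
Variable w : hatom -> nat.

Lemma R4_supp Defs ds P P' A e : R4_fold Defs ds P P' ->
  (forall d s, In d ds -> gr s -> Forall (sat_lit M) (bd (csubst s d)) ->
     holds M (hd (csubst s d)) /\ w (hd (csubst s d)) <= sumw w (bd (csubst s d))) ->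
  supp M w P A e -> supp M w P' A e.
Proof.
  intros [newp [xs [H [G1 [G2 [th [cs [rs [Hne [Hnd [Hds [Hhd [Hcs [Hth HP]]]]]]]]]]]]]] HD
    [c [s [Hc [Gs [Eh [Hb Hw]]]]]].
  destruct (classic (exists i, i < length ds /\ c = cs i)) as [[i [Hi ->]]|N].
  2: { exists c, s; repeat split; auto. apply HP; left; auto. }
  destruct (Hcs i Hi) as [Hci [Hr Ern]].
  set (d := nth i ds dummy_clause) in *.
  assert (Hd : In d ds) by (apply nth_In; auto).
  destruct (renaming_inv (rs i) s Hr) as [s' [Es' Gs']]. specialize (Gs' Gs).
  assert (Ei : csubst s (cs i) = csubst s' (H, G1 ++ gsubst th (bd d) ++ G2)).
  { rewrite <- Ern, rename_inst. apply csubst_ext_all. intros; rewrite Es'; auto. }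
  rewrite Ei in *. rewrite bd_csubst, !gsubst_app in Hb, Hw. rewrite hd_csubst in Eh.
  apply Forall_app_iff in Hb as [Hb1 Hb2]. apply Forall_app_iff in Hb2 as [Hb2 Hb3].
  rewrite gsubst_comp in Hb2, Hw.
  set (rho := fun x => tsubst s' (th x)) in *.
  destruct (HD d rho Hd (gr_comp _ _ Gs') Hb2) as [Hh Hwd].
  change (hd (csubst rho d)) with (asubst rho (hd d)) in Hh, Hwd.
  change (bd (csubst rho d)) with (gsubst rho (bd d)) in Hwd.
  rewrite (Hhd d Hd) in Hh, Hwd. unfold asubst in Hh, Hwd; simpl in Hh, Hwd.
  exists (H, G1 ++ LAt newp (map (tsubst th) (map Var xs)) :: G2), s'.
  split; [|split; [|split; [|split]]].
  - apply HP; right; auto.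
  - auto.
  - rewrite hd_csubst; auto.
  - rewrite bd_csubst, gsubst_app, gsubst_cons. apply Forall_app_iff; split; auto. constructor; auto.
    simpl. rewrite map_tsubst_comp. exact Hh.
  - rewrite bd_csubst, gsubst_app, gsubst_cons, !sumw_app. simpl. rewrite !sumw_app in Hw.
    rewrite map_tsubst_comp. fold rho. lia.
Qed.

Lemma R4_models Defs ds P P' : R4_fold Defs ds P P' -> models M P ->
  (forall q u, M q u -> (exists d, In d ds /\ hpred (hd d) = (q, length u)) ->
     exists d s, In d ds /\ gr s /\ hd (csubst s d) = (q, u) /\ Forall (sat_lit M) (bd (csubst s d))) ->
  models M P'.
Proof.
  intros [newp [xs [H [G1 [G2 [th [cs [rs [Hne [Hnd [Hds [Hhd [Hcs [Hth HP]]]]]]]]]]]]]] HM HS.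
  apply models_intro. intros c tau Hc Gt Hb. apply HP in Hc.
  destruct Hc as [[Hc _]| ->]; [apply (models_inst M P); auto|].
  rewrite bd_csubst, gsubst_app, gsubst_cons in Hb.
  apply Forall_app_iff in Hb as [Hb1 Hb2]. apply Forall_cons_iff in Hb2 as [Ha Hb3].
  simpl in Ha.
  set (u := map (tsubst tau) (map (tsubst th) (map Var xs))) in *.
  destruct (HS newp u Ha) as [d [sd [Hd [Gsd [Ehd Hbd]]]]].
  { destruct ds as [|d0 ds']; [congruence|]. exists d0. split; [left; auto|].
    rewrite (proj2 (proj1 (Hds d0) (or_introl eq_refl))). unfold u; rewrite !length_map; auto. }
  destruct (In_nth ds d dummy_clause Hd) as [i [Hi Ei]].
  destruct (Hcs i Hi) as [Hci [Hr Ern]]. rewrite Ei in Ern.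
  assert (Exs : forall z, In z xs -> sd z = tsubst tau (th z)).
  { change (hd (csubst sd d)) with (asubst sd (hd d)) in Ehd.
    rewrite (Hhd d Hd) in Ehd. unfold asubst in Ehd; simpl in Ehd. injection Ehd; intros E.
    unfold u in E. rewrite !map_map in E. intros z Hz. apply (map_eq_in _ _ _ E z Hz). }
  set (Loc := fun y => exists x, In x (gvars (bd d)) /\ ~ In x xs /\ th x = Var y).
  set (sg := fun y => match excluded_middle_informative (Loc y) with
                      | left h => sd (proj1_sig (constructive_indefinite_description _ h))
                      | right _ => tau y end).
  assert (Gsg : gr sg) by (intros y; unfold sg; destruct excluded_middle_informative; auto).
  assert (P1 : forall x y, In x (gvars (bd d)) -> ~ In x xs -> th x = Var y -> sg y = sd x).
  { intros x y Hx Nx Ey. unfold sg. destruct excluded_middle_informative as [h|h].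
    - destruct constructive_indefinite_description as [x' [Hx' [Nx' Ey']]]; simpl.
      destruct (Nat.eq_dec x' x) as [->|Nxx]; auto. exfalso.
      destruct (Hth d Hd x Hx Nx) as [y0 [Ey0 [_ Hz]]]. rewrite Ey in Ey0. injection Ey0; intros <-.
      apply (Hz x' Hx' Nxx). rewrite Ey'. simpl; auto.
    - exfalso; apply h; exists x; auto. }
  assert (P2 : forall v, In v (avars H ++ gvars G1 ++ gvars G2) -> sg v = tau v).
  { intros v Hv. unfold sg. destruct excluded_middle_informative as [h|h]; auto. exfalso.
    destruct h as [x [Hx [Nx Ex]]]. destruct (Hth d Hd x Hx Nx) as [y0 [Ey0 [Hn _]]].
    rewrite Ex in Ey0. injection Ey0; intros <-. auto. }
  assert (P3 : forall z, In z (gvars (bd d)) -> tsubst sg (th z) = sd z).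
  { intros z Hz. destruct (classic (In z xs)) as [Iz|Nz].
    - rewrite Exs; auto. apply tsubst_ext. intros v Hv. unfold sg.
      destruct excluded_middle_informative as [h|h]; auto. exfalso.
      destruct h as [x [Hx [Nx Ex]]]. destruct (Hth d Hd x Hx Nx) as [y0 [Ey0 [_ Hz']]].
      rewrite Ex in Ey0. injection Ey0; intros <-. apply (Hz' z Hz); auto.
      intros ->; auto.
    - destruct (Hth d Hd z Hz Nz) as [y0 [Ey0 _]]. rewrite Ey0. simpl. apply P1; auto. }
  change (holds M (asubst tau H)).
  assert (EH : asubst sg H = asubst tau H) by (apply asubst_ext; intros; apply P2, in_or_app; auto).
  rewrite <- EH. change (holds M (hd (csubst sg (H, G1 ++ gsubst th (bd d) ++ G2)))).
  rewrite <- Ern. apply (models_rename M P); auto. rewrite Ern, bd_csubst, !gsubst_app.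
  rewrite (gsubst_ext sg tau G1), (gsubst_ext sg tau G2).
  - apply Forall_app_iff; split; auto. apply Forall_app_iff; split; auto.
    rewrite gsubst_comp. rewrite (gsubst_ext _ sd); auto.
  - intros; apply P2; rewrite !in_app_iff; auto.
  - intros; apply P2; rewrite !in_app_iff; auto.
Qed.

End R4.


Lemma exists_min (P : nat -> Prop) : (exists n, P n) -> exists n, P n /\ forall m, P m -> n <= m.
Proof.
  intros [n Hn]. induction n as [n IH] using (well_founded_induction lt_wf).
  destruct (classic (exists m, m < n /\ P m)) as [[m [Hm Pm]]|N].
  - apply (IH m Hm Pm).
  - exists n; split; auto. intros m Pm. destruct (Nat.lt_ge_cases m n); auto. exfalso; eauto.
Qed.

Lemma hpred_inst s c A : hd (csubst s c) = A -> hpred (hd c) = hpred A.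
Proof. intros <-. unfold hpred, csubst, asubst; simpl. rewrite length_map; auto. Qed.

Lemma w_le_sumw (w : hatom -> nat) g q ts : In (LAt q ts) g -> w (q, ts) <= sumw w g.
Proof. induction g as [|l g IH]; simpl; [tauto|]. intros [E|E]. subst; simpl; lia.
  destruct l; simpl; specialize (IH E); lia. Qed.

Section Weights.
Variable Q : program.
Variable fu : clause -> Prop.
Variable M : interp.
Hypothesis HM : least_model Q M.

Inductive prov : hatom -> nat -> Prop :=
| prov_i c s A m d : In c Q -> gr s -> hd (csubst s c) = A -> provg (bd (csubst s c)) m ->
    ((fu c /\ d = 0) \/ (~ fu c /\ d = 1)) -> prov A (m + d)
with provg : goal -> nat -> Prop :=
| pg_nil : provg [] 0
| pg_eq t1 t2 g m : t1 = t2 -> provg g m -> provg (LEq t1 t2 :: g) m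
| pg_neq t1 t2 g m : t1 <> t2 -> provg g m -> provg (LNeq t1 t2 :: g) m
| pg_at q ts g m1 m2 : prov (q, ts) m1 -> provg g m2 -> provg (LAt q ts :: g) (m1 + m2).

Scheme prov_ind2 := Induction for prov Sort Prop
with provg_ind2 := Induction for provg Sort Prop.

Lemma prov_sound : (forall A m, prov A m -> holds M A) /\ (forall g m, provg g m -> Forall (sat_lit M) g).
Proof.
  destruct HM as [_ [HQ _]].
  assert (K1 : forall c s A m d (H0 : In c Q) (H1 : gr s) (H2 : hd (csubst s c) = A)
     (p : provg (bd (csubst s c)) m), Forall (sat_lit M) (bd (csubst s c)) ->
     (fu c /\ d = 0) \/ (~ fu c /\ d = 1) -> holds M A).
  { intros; subst; apply (models_inst M Q); auto. }
  split.
  - apply (prov_ind2 (fun A m _ => holds M A) (fun g m _ => Forall (sat_lit M) g)); auto;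
    intros; constructor; auto.
  - apply (provg_ind2 (fun A m _ => holds M A) (fun g m _ => Forall (sat_lit M) g)); auto;
    intros; constructor; auto.
Qed.

Lemma provg_of (I : interp) g : (forall q ts, I q ts -> exists m, prov (q, ts) m) ->
  Forall (sat_lit I) g -> exists m, provg g m.
Proof.
  intros HI; induction g as [|l g IH]; intros F.
  - exists 0; constructor.
  - apply Forall_cons_iff in F as [Hl F]. destruct (IH F) as [m Hm].
    destruct l; simpl in Hl.
    + exists m; constructor; auto.
    + exists m; constructor; auto.
    + destruct (HI p args Hl) as [m1 H1]. exists (m1 + m); constructor; auto.
Qed.

Lemma prov_complete q ts : M q ts -> exists m, prov (q, ts) m.
Proof.
  destruct HM as [_ [_ Hl]]. intros Hq.
  apply (Hl (fun q ts => exists m, prov (q, ts) m)); auto.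
  - intros q' ts' [m Hp]. inversion Hp; subst. unfold csubst, asubst in H1; simpl in H1.
    injection H1; intros <- _. apply Forall_forall. intros t Ht. apply in_map_iff in Ht as [u [<- _]].
    apply ground_tsubst; auto.
  - apply models_intro. intros c s Hc Gs Hb.
    destruct (provg_of _ _ (fun q ts H => H) Hb) as [m Hm].
    destruct (classic (fu c)) as [F|F].
    + exists (m + 0). destruct (hd (csubst s c)) as [q0 ts0] eqn:E. simpl.
      eapply prov_i; eauto.
    + exists (m + 1). destruct (hd (csubst s c)) as [q0 ts0] eqn:E. simpl.
      eapply prov_i; eauto.
Qed.

Definition wt (A : hatom) : nat :=
  epsilon (inhabits 0) (fun m => prov A m /\ forall m', prov A m' -> m <= m').

Lemma wt_spec A : holds M A -> prov A (wt A) /\ forall m', prov A m' -> wt A <= m'.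
Proof.
  intros H. destruct A as [q ts]. destruct (prov_complete q ts H) as [m Hm].
  apply (epsilon_spec (inhabits 0) (fun m => prov (q, ts) m /\ forall m', prov (q, ts) m' -> m <= m')).
  apply exists_min; eauto.
Qed.

Lemma provg_sumw g m : provg g m -> sumw wt g <= m.
Proof.
  induction 1; simpl; auto. pose proof (proj2 (wt_spec (q, ts) (proj1 prov_sound _ _ H)) m1 H). lia.
Qed.

Lemma body_provg g : Forall (sat_lit M) g -> provg g (sumw wt g).
Proof.
  induction g as [|l g IH]; intros F; [constructor|].
  apply Forall_cons_iff in F as [Hl F]. destruct l; simpl in *; constructor; auto.
  apply (wt_spec (p, args)); auto.
Qed.

Lemma wt_clause c s : In c Q -> gr s -> Forall (sat_lit M) (bd (csubst s c)) ->
  wt (hd (csubst s c)) <= sumw wt (bd (csubst s c)) + (if excluded_middle_informative (fu c) then 0 else 1).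
Proof.
  intros Hc Gs Hb. pose proof (body_provg _ Hb) as Hp.
  assert (Hh : holds M (hd (csubst s c))) by (destruct HM as [_ [HQ _]]; apply (models_inst M Q); auto).
  apply (proj2 (wt_spec _ Hh)). destruct excluded_middle_informative as [F|F]; eapply prov_i; eauto.
Qed.

Lemma prov_inv A m : prov A m -> exists c s m' d, In c Q /\ gr s /\ hd (csubst s c) = A /\
  provg (bd (csubst s c)) m' /\ ((fu c /\ d = 0) \/ (~ fu c /\ d = 1)) /\ m = m' + d.
Proof. destruct 1. exists c, s, m, d; auto 10. Qed.

Lemma wt_minproof A : holds M A -> exists c s, In c Q /\ gr s /\ hd (csubst s c) = A /\
  Forall (sat_lit M) (bd (csubst s c)) /\
  ((fu c /\ sumw wt (bd (csubst s c)) <= wt A) \/ (~ fu c /\ sumw wt (bd (csubst s c)) + 1 <= wt A)).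
Proof.
  intros H. destruct (wt_spec A H) as [Hp _].
  destruct (prov_inv _ _ Hp) as [c [s [m [d [Hc [Gs [Eh [Hg [Hd E]]]]]]]]].
  exists c, s. pose proof (provg_sumw _ _ Hg). rewrite E.
  split; auto. split; auto. split; auto. split. apply (proj2 prov_sound _ _ Hg).
  destruct Hd as [[F ->]|[F ->]]; [left|right]; split; auto; lia.
Qed.

End Weights.


Lemma supp_mono M w P P' A e : (forall c, In c P -> In c P') -> supp M w P A e -> supp M w P' A e.
Proof. intros H [c [s [Hc R]]]. exists c, s; auto. Qed.

Lemma occurs_hd P c : In c P -> occurs_pred P (hpred (hd c)).
Proof. intros H; exists c; split; auto; left; auto. Qed.

Lemma occurs_body P c q : In c P -> In q (gpreds (bd c)) -> occurs_pred P q.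
Proof. intros H Hq; exists c; split; auto; right; auto. Qed.

Section Main.
Variables (n : nat) (Ps : nat -> program) (lab : nat -> rule_label).
Hypothesis HT : transformation_sequence Ps lab n.

Lemma defs_in k d : In d (defs lab k) <-> exists k' ds, k' < k /\ lab k' = RDef ds /\ In d ds.
Proof.
  induction k; simpl.
  - split; [intros []| intros [? [? [H _]]]; lia].
  - rewrite in_app_iff, IHk. split.
    + intros [[k' [ds [H1 [H2 H3]]]]| H]. { exists k', ds; split; [lia|auto]. }
      destruct (lab k) eqn:E; try (destruct H). exists k, ds; auto.
    + intros [k' [ds [H1 [H2 H3]]]]. destruct (Nat.eq_dec k' k) as [->|N].
      * right; rewrite H2; auto.
      * left; exists k', ds; split; [lia| auto].
Qed.

Lemma tstep_at k : k < n -> tstep Ps lab k.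
Proof. intros; apply HT; auto. Qed.

Lemma R1_at k ds : k < n -> lab k = RDef ds -> R1_def_intro Ps k ds (Ps k) (Ps (S k)).
Proof. intros Hk E. pose proof (HT k Hk) as T. unfold tstep in T. rewrite E in T. exact T. Qed.

Lemma R4_at k ds : k < n -> lab k = RFold ds -> R4_fold (defs lab k) ds (Ps k) (Ps (S k)).
Proof. intros Hk E. pose proof (HT k Hk) as T. unfold tstep in T. rewrite E in T. exact T. Qed.

Lemma R3_at k c : k < n -> lab k = RUnfold c -> R3_unfold c (Ps k) (Ps (S k)).
Proof. intros Hk E. pose proof (HT k Hk) as T. unfold tstep in T. rewrite E in T. exact T. Qed.

Lemma R2_at k p : k < n -> lab k = RElim p -> R2_def_elim p (Ps k) (Ps (S k)).
Proof. intros Hk E. pose proof (HT k Hk) as T. unfold tstep in T. rewrite E in T. exact T. Qed.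

Lemma fresh k ds d i : k < n -> lab k = RDef ds -> In d ds -> i <= k -> ~ occurs_pred (Ps i) (hpred (hd d)).
Proof.
  intros Hk E Hd Hi. destruct (R1_at k ds Hk E) as [newp [xs [_ [_ [Hf [HD _]]]]]].
  destruct (HD d Hd) as [Ehd _]. rewrite Ehd. unfold hpred; simpl. rewrite length_map. apply Hf; auto.
Qed.

Lemma intro_in k ds d : k < n -> lab k = RDef ds -> In d ds -> In d (Ps (S k)).
Proof.
  intros Hk E Hd. destruct (R1_at k ds Hk E) as [newp [xs [_ [_ [_ [_ [_ HP]]]]]]]. apply HP; auto.
Qed.

Lemma def_notP0 d : In d (defs lab n) -> ~ occurs_pred (Ps 0) (hpred (hd d)).
Proof. intros Hd. apply defs_in in Hd as [k [ds [Hk [E Hd]]]]. apply (fresh k ds); auto; lia. Qed.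

Lemma occurs_avail k q : k <= n -> occurs_pred (Ps k) q ->
  forall d, In d (defs lab n) -> hpred (hd d) = q -> In d (defs lab k).
Proof.
  intros Hk Ho d Hd Eq. apply defs_in in Hd as [k' [ds [Hk' [E Hd]]]].
  destruct (Nat.lt_ge_cases k' k) as [L|L].
  - apply defs_in. exists k', ds; auto.
  - exfalso. apply (fresh k' ds d k); auto. rewrite Eq; auto.
Qed.

Lemma unique_intro k1 k2 ds1 ds2 d1 d2 : k1 < n -> k2 < n -> lab k1 = RDef ds1 -> lab k2 = RDef ds2 ->
  In d1 ds1 -> In d2 ds2 -> hpred (hd d1) = hpred (hd d2) -> k1 = k2.
Proof.
  intros H1 H2 E1 E2 I1 I2 Eq.
  destruct (Nat.lt_trichotomy k1 k2) as [L|[L|L]]; auto; exfalso.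
  - apply (fresh k2 ds2 d2 (S k1)); auto. rewrite <- Eq. apply occurs_hd. apply (intro_in k1 ds1); auto.
  - apply (fresh k1 ds1 d1 (S k2)); auto. rewrite Eq. apply occurs_hd. apply (intro_in k2 ds2); auto.
Qed.

Lemma fold_all k ds d : k < n -> lab k = RFold ds -> In d (defs lab n) ->
  (exists d0, In d0 ds /\ hpred (hd d) = hpred (hd d0)) -> In d ds.
Proof.
  intros Hk E Hd [d0 [Hd0 Eq]].
  pose proof (R4_at k ds Hk E) as R4.
  destruct R4 as [newp [xs [Hh0 [G1 [G2 [th [cs [rs R4]]]]]]]].
  destruct R4 as [Hne [Hnd [Hds [Hhd [Hcs [Hth HP]]]]]].
  apply Hds. apply Hds in Hd0 as [_ Ep]. rewrite Eq, Ep. split; auto.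
  apply defs_in in Hd as [k' [ds' [Hk' [E' Hd']]]].
  destruct (Nat.lt_ge_cases k' k) as [L|L].
  - apply defs_in; exists k', ds'; auto.
  - exfalso. assert (k' <> k) by (intros ->; congruence).
    apply (fresh k' ds' d (S k)); auto; try lia. rewrite Eq, Ep.
    apply (occurs_body _ (Hh0, G1 ++ LAt newp (map (tsubst th) (map Var xs)) :: G2)).
    + apply HP; right; auto.
    + simpl. unfold gpreds. rewrite flat_map_app. apply in_or_app; right. simpl. left.
      rewrite !length_map; auto.
Qed.

Definition fu (c : clause) : Prop := exists k ds, k < n /\ lab k = RFold ds /\ In c ds.

Lemma fu_def c : fu c -> In c (defs lab n).
Proof.
  intros [k [ds [Hk [E Hc]]]].
  destruct (R4_at k ds Hk E) as [newp [xs [H [G1 [G2 [th [cs [rs [Hne [Hnd [Hds Hrest]]]]]]]]]]].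
  destruct (proj1 (Hds c) Hc) as [Hc' _]. apply defs_in in Hc' as [k' [ds' [H1 [H2 H3]]]].
  apply defs_in. exists k', ds'; split; auto; lia.
Qed.

Variable M : interp.
Hypothesis HM : least_model (Ps 0 ++ defs lab n) M.

Let Q := Ps 0 ++ defs lab n.
Let w := wt Q fu.

Lemma MQ : models M Q.
Proof. destruct HM as [_ [H _]]; exact H. Qed.

Lemma sound k : k <= n -> models M (Ps k).
Proof.
  induction k as [|k IH]; intros Hk.
  - intros c s Hc Gs. apply MQ; auto. apply in_or_app; auto.
  - assert (HMk : models M (Ps k)) by (apply IH; lia).
    pose proof (HT k ltac:(lia)) as T. unfold tstep in T. destruct (lab k) eqn:E.
    + destruct T as [newp [xs [_ [_ [_ [_ [_ HP]]]]]]].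
      apply models_intro. intros c s Hc Gs Hb. apply HP in Hc as [Hc|Hc].
      * apply (models_inst M (Ps k)); auto.
      * apply (models_inst M Q); auto. apply MQ. apply in_or_app; right. apply defs_in.
        exists k, ds; split; auto; lia.
    + intros c s Hc Gs. apply T in Hc as [Hc _]. apply HMk; auto.
    + eapply R3_models; eauto.
    + eapply R4_models; eauto. intros q u Hq [d [Hd Ed]].
      destruct (wt_minproof Q fu M HM (q, u) Hq) as [c [s [Hc [Gs [Eh [Hb _]]]]]].
      exists c, s. repeat split; auto.
      apply in_app_iff in Hc as [Hc|Hc].
      * exfalso. apply (def_notP0 d). apply fu_def. exists k, ds; split; auto; lia.
        rewrite Ed. change (q, length u) with (hpred (q, u)). rewrite <- (hpred_inst s c (q, u) Eh).
        apply occurs_hd; auto.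
      * apply (fold_all k ds c); auto; try lia. exists d; split; auto.
        rewrite Ed. apply (hpred_inst s c (q, u) Eh).
    + eapply R5_models; eauto.
    + eapply R6_models; eauto.
    + eapply R7_models; eauto.
    + eapply R8_models; eauto.
    + eapply R9_models; eauto.
Qed.

Definition avail k q := forall d, In d (defs lab n) -> hpred (hd d) = q -> In d (defs lab k).
Definition WS k := forall A, holds M A -> avail k (hpred A) -> supp M w (Ps k) A 0.

Lemma step_supp k A e : k < n -> (forall q, lab k <> RElim q) -> WS k ->
  supp M w (Ps k) A e -> supp M w (Ps (S k)) A e.
Proof.
  intros Hk NE HW S. pose proof (HT k Hk) as T. unfold tstep in T. destruct (lab k) eqn:E.
  - destruct T as [newp [xs [_ [_ [_ [_ [_ HP]]]]]]]. apply (supp_mono _ _ (Ps k)); auto.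
    intros c Hc; apply HP; auto.
  - exfalso; apply (NE p); auto.
  - destruct S as [c0 [s [Hc0 [Gs [Eh [Hb Hw]]]]]].
    destruct (classic (c0 = c)) as [->|N].
    + destruct (R3_supp_C0 M w c (Ps k) (Ps (S k)) s 0 T Gs Hb) as [c' [s' [Hc' [Gs' [Eh' [Hb' Hw']]]]]].
      * intros q ts Hi. apply HW.
        -- rewrite Forall_forall in Hb. apply (Hb _ Hi).
        -- intros d Hd Ed. apply (occurs_avail k (q, length ts)); auto; try lia.
           apply (occurs_body _ c); auto. apply (atom_inst_pred s). exact Hi.
      * exists c', s'; repeat split; auto. congruence. lia.
    + exists c0, s; repeat split; auto. destruct T as [_ [r [H [G1 [G2 [a [args [th [_ [_ [_ [_ HP]]]]]]]]]]]].
      apply HP; left; auto.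
  - eapply R4_supp; eauto. intros d s Hd Gs Hb. split.
    + apply (models_inst M Q); auto. apply MQ. apply in_or_app; right. apply fu_def.
      exists k, ds; auto.
    + pose proof (wt_clause Q fu M HM d s) as K.
      destruct excluded_middle_informative as [F|F] in K.
      * rewrite Nat.add_0_r in K. apply K; auto. apply in_or_app; right. apply fu_def; auto.
      * exfalso; apply F. exists k, ds; auto.
  - eapply R5_supp; eauto.
  - eapply R6_supp; eauto.
  - eapply R7_supp; eauto.
  - eapply R8_supp; eauto.
  - eapply R9_supp; eauto.
Qed.


Lemma WS0 : WS 0.
Proof.
  intros A HA Hav. destruct (wt_minproof Q fu M HM A HA) as [c [s [Hc [Gs [Eh [Hb Hw]]]]]].
  apply in_app_iff in Hc as [Hc|Hc].
  - exists c, s; repeat split; auto. destruct Hw as [[_ ?]|[_ ?]]; unfold w; lia.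
  - exfalso. pose proof (Hav c Hc (hpred_inst s c A Eh)) as X. simpl in X. exact X.
Qed.

Lemma WS_step k : k < n -> (forall q, lab k <> RElim q) -> WS k -> WS (S k).
Proof.
  intros Hk NE HW A HA Hav.
  destruct (wt_minproof Q fu M HM A HA) as [c [s [Hc [Gs [Eh [Hb Hw]]]]]].
  assert (Hw0 : sumw w (bd (csubst s c)) + 0 <= w A) by (destruct Hw as [[_ ?]|[_ ?]]; unfold w; lia).
  apply in_app_iff in Hc as [Hc|Hc].
  - apply step_supp; auto. apply HW; auto. intros d Hd Ed. exfalso. apply (def_notP0 d Hd).
    rewrite Ed, <- (hpred_inst s c A Eh). apply occurs_hd; auto.
  - pose proof (Hav c Hc (hpred_inst s c A Eh)) as X. simpl in X. apply in_app_iff in X as [X|X].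
    + apply step_supp; auto. apply HW; auto. intros d Hd Ed.
      apply defs_in in X as [kc [dsc [Hkc [Ec Ic]]]].
      pose proof Hd as Hd'. apply defs_in in Hd' as [kd [dsd [Hkd [Ed' Id]]]].
      assert (kd = kc).
      { apply (unique_intro kd kc dsd dsc d c); auto; try lia. rewrite Ed. symmetry; apply (hpred_inst s c A Eh). }
      subst. apply defs_in. exists kc, dsd; auto.
    + destruct (lab k) eqn:E; try destruct X. exists c, s; repeat split; auto. apply (intro_in k ds); auto.
Qed.

Section Fin.
Variable N : nat.
Hypothesis HN : N <= n.
Hypothesis HNE : forall k, k < N -> forall q, lab k <> RElim q.
Hypothesis HNL : forall k, k < n -> (forall q, lab k <> RElim q) -> k < N.

Lemma WS_all k : k <= N -> WS k.
Proof.
  induction k; intros Hk. apply WS0. apply WS_step. lia. apply HNE; lia. apply IHk; lia.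
Qed.

Lemma persist k1 k2 A e : k1 <= k2 -> k2 <= N -> supp M w (Ps k1) A e -> supp M w (Ps k2) A e.
Proof.
  induction k2; intros H1 H2 Sp.
  - replace k1 with 0 in Sp by lia. auto.
  - destruct (Nat.eq_dec k1 (S k2)) as [->|Nk]; auto.
    apply step_supp. lia. apply HNE; lia. apply WS_all; lia. apply IHk2; auto; lia.
Qed.

Lemma SP0 B : holds M B -> occurs_pred (Ps 0) (hpred B) -> supp M w (Ps 0) B 1.
Proof.
  intros HB Ho. destruct (wt_minproof Q fu M HM B HB) as [c [s [Hc [Gs [Eh [Hb Hw]]]]]].
  apply in_app_iff in Hc as [Hc|Hc].
  - destruct Hw as [[F _]|[_ Hw]].
    + exfalso. apply (def_notP0 c (fu_def c F)). apply occurs_hd; auto.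
    + exists c, s; repeat split; auto.
  - exfalso. apply (def_notP0 c Hc). rewrite (hpred_inst s c B Eh); auto.
Qed.

Lemma def_body_P0 d q : In d (defs lab n) -> In q (gpreds (bd d)) -> occurs_pred (Ps 0) q.
Proof.
  intros Hd Hq. apply defs_in in Hd as [k [ds [Hk [E Hd]]]].
  destruct (R1_at k ds Hk E) as [newp [xs [_ [_ [_ [HD _]]]]]].
  destruct (HD d Hd) as [_ [Hb _]]. auto.
Qed.

Hypothesis Hfold : forall k ds, k < n -> lab k = RFold ds -> forall d, In d ds ->
  exists j, 1 <= j <= n - 1 /\ In d (Ps j) /\ lab j = RUnfold d.

Lemma strict_all A : holds M A -> supp M w (Ps N) A 1.
Proof.
  intros HA. destruct (wt_minproof Q fu M HM A HA) as [c [s [Hc [Gs [Eh [Hb Hw]]]]]].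
  apply in_app_iff in Hc as [Hc|Hc].
  - apply (persist 0); try lia. apply SP0; auto. rewrite <- (hpred_inst s c A Eh). apply occurs_hd; auto.
  - destruct Hw as [[F Hw]|[F Hw]].
    + destruct F as [k [ds [Hk [E Hcd]]]].
      destruct (Hfold k ds Hk E c Hcd) as [j [Hj [Hcj Ej]]].
      assert (Hjn : j < n) by lia.
      assert (HjN : j < N) by (apply HNL; auto; intros q; rewrite Ej; discriminate).
      destruct (R3_supp_C0 M w c (Ps j) (Ps (S j)) s 1 (R3_at j c Hjn Ej) Gs Hb) as [c' [s' [Hc' [Gs' [Eh' [Hb' Hw']]]]]].
      * intros q ts Hi. apply (persist 0); try lia. apply SP0.
        -- rewrite Forall_forall in Hb. apply (Hb _ Hi).
        -- apply (def_body_P0 c); auto. apply (atom_inst_pred s). exact Hi.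
      * apply (persist (S j)); try lia. exists c', s'; repeat split; auto. congruence. unfold w in *; lia.
    + apply defs_in in Hc as Hc'. destruct Hc' as [k' [ds [Hk' [E Hcd]]]].
      assert (k' < N) by (apply HNL; auto; intros q; rewrite E; discriminate).
      apply (persist (S k')); try lia. exists c, s; repeat split; auto. apply (intro_in k' ds); auto.
Qed.

Lemma complete (Rel : pred -> Prop) (Mn : interp) : models Mn (Ps n) ->
  (forall c, In c (Ps N) -> Rel (hpred (hd c)) -> In c (Ps n)) ->
  (forall c q, In c (Ps N) -> Rel (hpred (hd c)) -> In q (gpreds (bd c)) -> Rel q) ->
  forall A, holds M A -> Rel (hpred A) -> holds Mn A.
Proof.
  intros HMn HR1 HR2.
  assert (K : forall m A, w A < m -> holds M A -> Rel (hpred A) -> holds Mn A).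
  { induction m as [|m IH]; intros A HwA HA HRA; [lia|].
    destruct (strict_all A HA) as [c [s [Hc [Gs [Eh [Hb Hw]]]]]].
    rewrite <- Eh. rewrite <- (hpred_inst s c A Eh) in HRA.
    apply (models_inst Mn (Ps n)); auto.
    apply Forall_forall. intros l Hl. rewrite Forall_forall in Hb. specialize (Hb l Hl).
    destruct l; simpl in *; auto.
    apply (IH (p, args)); auto.
    - pose proof (w_le_sumw w _ p args Hl). lia.
    - apply (HR2 c); auto. apply (atom_inst_pred s). exact Hl. }
  intros A HA HRA. apply (K (S (w A))); auto.
Qed.

End Fin.

End Main.



Theorem theorem5 (n : nat) (Ps : nat -> program) (lab : nat -> rule_label) (p : pred) :
  transformation_sequence Ps lab n ->
  occurs_pred (Ps n) p ->
  (forall k ds, k < n -> lab k = RFold ds ->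
     forall d, In d ds ->
       exists j, 1 <= j <= n - 1 /\ In d (Ps j) /\ lab j = RUnfold d) ->
  (forall k q, k < n -> lab k = RElim q -> k = n - 1 /\ q = p) ->
  forall M0 Mn : interp,
    least_model (Ps 0 ++ defs lab n) M0 ->
    least_model (Ps n) Mn ->
    forall (q : nat) (ts : list term),
      (q, length ts) = p -> Forall ground ts ->
      (M0 q ts <-> Mn q ts).
Proof.
  intros HT _ Hfold Helim M0 Mn HM0 HMn q ts Hp _. split.
  - intros H0. change (holds Mn (q, ts)).
    destruct (classic (exists r, 0 < n /\ lab (n - 1) = RElim r)) as [[r [Hn Er]]|NR].
    + destruct (Helim (n - 1) r ltac:(lia) Er) as [_ ->].
      set (Rel := fun r => r = p \/ depends (Ps (n - 1)) p r).
      apply (complete n Ps lab HT M0 HM0 (n - 1)) with (Rel := Rel); auto.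
      * lia.
      * intros k Hk r' E. destruct (Helim k r' ltac:(lia) E); lia.
      * intros k Hk NE. destruct (Nat.eq_dec k (n - 1)) as [->|Nk]; [|lia].
        exfalso; apply (NE p); auto.
      * destruct HMn as [_ [H _]]; exact H.
      * intros c Hc HR. pose proof (R2_at n Ps lab HT (n - 1) p ltac:(lia) Er) as R2.
        replace (S (n - 1)) with n in R2 by lia. apply R2. split; auto.
        destruct HR as [HR|HR]; [left; auto|right; eauto].
      * intros c q' Hc HR Hq. right.
        assert (D : dep1 (Ps (n - 1)) (hpred (hd c)) q') by (exists c; auto).
        destruct HR as [HR|HR].
        -- rewrite <- HR. apply t_step; auto.
        -- eapply t_trans; eauto. apply t_step; auto.
      * unfold Rel; left; simpl; auto.
    + apply (complete n Ps lab HT M0 HM0 n) with (Rel := fun _ => True); auto.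
      * intros k Hk r E. apply NR. exists r. destruct (Helim k r Hk E); split; try lia. subst; auto.
      * destruct HMn as [_ [H _]]; exact H.
  - intros Hn. destruct HMn as [_ [_ Hl]]. apply (Hl M0); auto.
    + destruct HM0 as [H _]; exact H.
    + apply (sound n Ps lab HT M0 HM0 n). lia.
Qed.
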